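(* Let $q$ be a prime with $q\equiv 1 \pmod 4$ and let $\zeta\in\mathbb Z$ be such that its residue generates $(\mathbb Z/q)^\times$. Let $D$ be the group of order $q^3$ generated by $d_1,d_2,d_3$ of order $q$, with $D = (\langle d_3\rangle\times\langle d_2\rangle)\rtimes\langle d_1\rangle$, where $d_3$ is central and $d_1^{-1}d_2d_1 = d_2d_3$. Let $\tau,\alpha_1,\alpha_2$ be the automorphisms of $D$ given by $\tau: d_1\mapsto d_2,\ d_2\mapsto d_1,\ d_3\mapsto d_3^{-1}$; $\alpha_1: d_1\mapsto d_1^{\zeta},\ d_2\mapsto d_2,\ d_3\mapsto d_3^{\zeta}$; $\alpha_2: d_1\mapsto d_1,\ d_2\mapsto d_2^{\zeta},\ d_3\mapsto d_3^{\zeta}$, and let $A=\langle\tau,\alpha_1,\alpha_2\rangle\le \operatorname{Aut}(D)$. Let $\Delta: A\to \operatorname{GL}_2(q)$ be the homomorphism with $\Delta(\tau)=\begin{pmatrix}0&1\\1&0\end{pmatrix}$, $\Delta(\alpha_1)=\begin{pmatrix}\zeta&0\\0&1\end{pmatrix}$, $\Delta(\alpha_2)=\begin{pmatrix}1&0\\0&\zeta\end{pmatrix}$. Let $M=\mathbb F_q^3$ (column vectors) with the left action of $D\rtimes A$ in which $d_1$ acts by $\begin{pmatrix}1&1&0\\0&1&0\\0&0&1\end{pmatrix}$, $d_2$ acts by $\begin{pmatrix}1&0&1\\0&1&0\\0&0&1\end{pmatrix}$, $d_3$ acts as the identity, and $a\in A$ acts by $\det(\Delta(a))\cdot\begin{pmatrix}1&0\\0&\Delta(a^{-1})^{\top}\end{pmatrix}$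 (a block diagonal matrix with a $1\times1$ block and a $2\times2$ block). Define $$\chi: D\to M,\quad d_1^{n_1}d_2^{n_2}d_3^{n_3}\mapsto \begin{pmatrix} n_3-\tfrac12 n_1n_2\\ -\tfrac12 n_2\\ \tfrac12 n_1\end{pmatrix}$$ (entries computed in $\mathbb F_q$). Then $(M,\chi)$ is an $A$-equivariant IYB-structure on $D$, and every $A$-equivariant IYB-structure on $D$ is isomorphic to $(M,\chi)$.
   Context: For a group $G$ and a left $\mathbb Z G$-module $M$, a $1$-cocycle is a map $\chi: G \to M$ with $\chi(gh) = \chi(g) + g\chi(h)$ for all $g,h\in G$. If a group $A$ acts on a finite group $G$ from the left by automorphisms (written $g\mapsto {}^a g$), an $A$-equivariant IYB-structure on $G$ is a pair $(M,\chi)$ where $M$ is a left $\mathbb Z[G\rtimes A]$-module and $\chi: G\to M$ (with $M$ regarded as a $G$-module by restriction) is a bijective $1$-cocycle satisfying $\chi({}^a g) = a\chi(g)$ for all $a\in A$, $g\in G$. Two $A$-equivariant IYB-structures $(M,\chi)$ and $(M',\chi')$ on $G$ are isomorphic if there is a $\mathbb Z[G\rtimes A]$-module isomorphism $\varphi: M\to M'$ with $\chi'=\varphi\circ\chi$. *)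

(* Defs.v *)
From HB Require Import structures.
From mathcomp Require Import all_boot all_order all_algebra all_fingroup.
From mathcomp Require Import center.
Set Implicit Arguments.
Unset Strict Implicit.
Unset Printing Implicit Defensive.
Import GRing.Theory.

(* CONVENTION: in MathComp, permutations compose left-to-right:
   (s * t)%g x = t (s x).  Hence the composition a \o b (first b, then a)
   of automorphisms a, b is the MathComp product (b * a)%g.  All "left action"
   and "homomorphism" axioms below for the group A of automorphisms are stated
   with respect to composition a \o b, i.e. using (b * a)%g. *)

Section IYB.
Variable gT : finGroupType.

Definition zexpg (x : gT) (z : int) : gT :=
  match z with
  | Posz n => (x ^+ n)%g
  | Negz n => ((x ^+ n.+1)^-1)%g
  end.

(* A left Z[G \rtimes A]-module structure on M, where A is a group of
   automorphisms of G (acting by evaluation a g), given by the restricted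
   actions of G and of A (this is exactly a module over the semidirect product). *)
Definition sdmodule (G : {set gT}) (A : {set {perm gT}}) (M : zmodType)
  (actG : gT -> M -> M) (actA : {perm gT} -> M -> M) : Prop :=
  [/\ (forall g, g \in G -> forall m m', actG g (m + m')%R = (actG g m + actG g m')%R),
      (forall m, actG 1%g m = m)
    & (forall g h, g \in G -> h \in G -> forall m, actG (g * h)%g m = actG g (actG h m))] /\
  [/\ (forall a, a \in A -> forall m m', actA a (m + m')%R = (actA a m + actA a m')%R),
      (forall m, actA 1%g m = m),
      (forall a b, a \in A -> b \in A -> forall m, actA (b * a)%g m = actA a (actA b m))
    & (forall a g, a \in A -> g \in G -> forall m, actA a (actG g m) = actG (a g) (actA a m))].

Definition IYB_structure (G : {set gT}) (A : {set {perm gT}}) (M : zmodType)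
  (actG : gT -> M -> M) (actA : {perm gT} -> M -> M) (chi : gT -> M) : Prop :=
  [/\ sdmodule G A actG actA,
      (forall g h, g \in G -> h \in G -> chi (g * h)%g = (chi g + actG g (chi h))%R),
      {in G &, injective chi},
      (forall m, exists2 g, g \in G & chi g = m)
    & (forall a g, a \in A -> g \in G -> chi (a g) = actA a (chi g))].

Definition IYB_iso (G : {set gT}) (A : {set {perm gT}})
  (M1 : zmodType) (actG1 : gT -> M1 -> M1) (actA1 : {perm gT} -> M1 -> M1) (chi1 : gT -> M1)
  (M2 : zmodType) (actG2 : gT -> M2 -> M2) (actA2 : {perm gT} -> M2 -> M2) (chi2 : gT -> M2)
  : Prop :=
  exists phi : M1 -> M2,
    [/\ (forall m m', phi (m + m')%R = (phi m + phi m')%R),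
        bijective phi,
        (forall g, g \in G -> forall m, phi (actG1 g m) = actG2 g (phi m)),
        (forall a, a \in A -> forall m, phi (actA1 a m) = actA2 a (phi m))
      & (forall g, g \in G -> chi2 g = phi (chi1 g))].
End IYB.

Local Open Scope ring_scope.
Definition swap2 (F : fieldType) : 'M[F]_2 :=
  \matrix_(i < 2, j < 2) (i != j :> nat)%:R.
Definition diag2 (F : fieldType) (x y : F) : 'M[F]_2 :=
  \matrix_(i < 2, j < 2) (if i == j :> nat then (if i == 0 :> nat then x else y) else 0%R).
Definition matX1 (F : fieldType) : 'M[F]_3 :=
  \matrix_(i < 3, j < 3) ((i == j :> nat) || ((i == 0 :> nat) && (j == 1 :> nat)))%:R.
Definition matX2 (F : fieldType) : 'M[F]_3 :=
  \matrix_(i < 3, j < 3) ((i == j :> nat) || ((i == 0 :> nat) && (j == 2 :> nat)))%:R.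

Definition actA_M (F : fieldType) (gT : finGroupType) (Delta : {perm gT} -> 'M[F]_2)
  (a : {perm gT}) (m : 'cV[F]_3) : 'cV[F]_3 :=
  ((\det (Delta a)) *: (block_mx (1%:M : 'M[F]_1) 0 0 (Delta a^-1)%g^T *m m))%R.

(* the value of chi on d1^n1 d2^n2 d3^n3 *)
Definition chi_val (F : fieldType) (n1 n2 n3 : nat) : 'cV[F]_3 :=
  \col_(i < 3) (if i == 0 :> nat then (n3%:R - n1%:R * n2%:R / 2%:R)%R
                else if i == 1 :> nat then (- (n2%:R / 2%:R))%R
                else (n1%:R / 2%:R)%R).

(* Main.v *)
Require Import Defs.
From HB Require Import structures.
From mathcomp Require Import all_boot all_order all_algebra all_fingroup.
From mathcomp Require Import center.
From mathcomp Require Import finfield.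
From mathcomp Require Import ring.
From mathcomp Require Import cyclic.
Import GRing.Theory.
Local Open Scope ring_scope.
Set Warnings "-all".
Set Implicit Arguments.
Unset Strict Implicit.
Unset Printing Implicit Defensive.


Section Prime.
Variable q : nat.
Hypothesis Hq : prime q.

Lemma q_gt0 : (0 < q)%N. Proof. exact: prime_gt0. Qed.

Lemma valFq (s : 'F_q) : ((val s)%:R : 'F_q) = s.
Proof. by rewrite natr_Zp. Qed.

Lemma valFq_lt (s : 'F_q) : (val s < q)%N.
Proof. by case: s => /= s; rewrite Fp_cast. Qed.

Lemma Fq_nat_eq n m : ((n%:R : 'F_q) = m%:R) <-> (n = m %[mod q])%N.
Proof.
split => [H|H].
  by have := congr1 (fun s : 'F_q => nat_of_ord s) H; rewrite /= !val_Fp_nat.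
by rewrite -(Fp_nat_mod Hq n) H Fp_nat_mod.
Qed.

Lemma Fq_nat0 n : ((n%:R : 'F_q) == 0) = (q %| n)%N.
Proof. by rewrite (dvdn_pcharf (pchar_Fp Hq)). Qed.

Definition is_addf (N : zmodType) (f : N -> N) := forall a b, f (a + b) = f a + f b.

Lemma addf0 (N : zmodType) (f : N -> N) : is_addf f -> f 0 = 0.
Proof. by move=> H; apply: (addrI (f 0)); rewrite -H !addr0. Qed.

Lemma addfMn (N : zmodType) (f : N -> N) : is_addf f -> forall n y, f (y *+ n) = f y *+ n.
Proof. by move=> H; elim=> [|n IH] y; rewrite ?addf0 // !mulrS H IH. Qed.

Lemma addfN (N : zmodType) (f : N -> N) : is_addf f -> forall y, f (- y) = - f y.
Proof. by move=> H y; apply/eqP; rewrite -addr_eq0 -H addNr addf0. Qed.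

Variable N : zmodType.

Lemma tor_mod (y : N) n : y *+ q = 0 -> y *+ n = y *+ (n %% q).
Proof. by move=> Hy; rewrite {1}(divn_eq n q) mulrnDr mulnC mulrnA Hy mul0rn add0r. Qed.

Lemma tor_eq (y : N) n m : y *+ q = 0 -> (n%:R : 'F_q) = m%:R -> y *+ n = y *+ m.
Proof. by move=> Hy /Fq_nat_eq H; rewrite (tor_mod n Hy) (tor_mod m Hy) H. Qed.

Definition sc (s : 'F_q) (y : N) := y *+ val s.

Lemma sc_nat n (y : N) : y *+ q = 0 -> sc n%:R y = y *+ n.
Proof. by move=> Hy; apply: tor_eq => //; rewrite valFq. Qed.

Lemma scD s t (y : N) : y *+ q = 0 -> sc (s + t) y = sc s y + sc t y.
Proof.
move=> Hy; rewrite /sc -mulrnDr; apply: tor_eq => //.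
by rewrite natrD !valFq.
Qed.

Lemma scM s t (y : N) : y *+ q = 0 -> sc (s * t) y = sc s (sc t y).
Proof.
move=> Hy; rewrite /sc -mulrnA; apply: tor_eq => //.
by rewrite natrM !valFq mulrC.
Qed.

Lemma sc1 (y : N) : y *+ q = 0 -> sc 1 y = y.
Proof. by move=> Hy; rewrite -[1]/(1%:R) sc_nat. Qed.

Lemma sc0 (y : N) : sc 0 y = 0.
Proof. by rewrite /sc /= mulr0n. Qed.

Lemma scN s (y : N) : y *+ q = 0 -> sc (- s) y = - sc s y.
Proof. by move=> Hy; apply/eqP; rewrite -addr_eq0 -scD // addNr sc0. Qed.

Lemma scDr s (y z : N) : sc s (y + z) = sc s y + sc s z.
Proof. by rewrite /sc mulrnDl. Qed.

Lemma scNr s (y : N) : sc s (- y) = - sc s y.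
Proof. by rewrite /sc mulNrn. Qed.

Lemma sc_tor s (y : N) : y *+ q = 0 -> sc s y *+ q = 0.
Proof. by move=> Hy; rewrite /sc mulrnAC Hy mul0rn. Qed.

Lemma sc_addf (f : N -> N) s y : is_addf f -> f (sc s y) = sc s (f y).
Proof. by move=> H; rewrite /sc addfMn. Qed.

Lemma sc_eq0 s (y : N) : y *+ q = 0 -> y != 0 -> sc s y = 0 -> s = 0.
Proof.
move=> Hy Hy0 H; apply/eqP; apply: contraT => Hs.
by move: Hy0; rewrite -(sc1 Hy) -(mulVf Hs) scM // H /sc mul0rn eqxx.
Qed.

Lemma sc_inj s t (y : N) : y *+ q = 0 -> y != 0 -> sc s y = sc t y -> s = t.
Proof.
move=> Hy Hy0 H; apply/eqP; rewrite -subr_eq0; apply/eqP.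
by apply: (sc_eq0 Hy Hy0); rewrite scD // scN // H subrr.
Qed.

Lemma mulrn_q0 (y : N) n : y *+ q = 0 -> y != 0 -> y *+ n = 0 -> (q %| n)%N.
Proof.
move=> Hy Hy0 H; rewrite -Fq_nat0; apply/eqP; apply: (sc_eq0 Hy Hy0).
by rewrite sc_nat.
Qed.

Lemma fermat_s (s : 'F_q) : s ^+ q = s.
Proof. have H := expf_card s; by rewrite card_Fp in H. Qed.

Lemma fermat_n n : ((n ^ q)%N%:R : 'F_q) = n%:R.
Proof. by rewrite natrX fermat_s. Qed.

Lemma cyc_fix (e : nat -> N) (f : N -> N) :
  is_addf f ->
  (forall i j, (i < q)%N -> (j < q)%N -> e i = e j -> i = j) ->
  (forall n, e n = e (n %% q)%N) -> e 0%N = 0 ->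
  (forall i j, exists k, e i + e j = e k) ->
  (forall i, exists k, f (e i) = e k) ->
  iter q f (e 1%N) = e 1%N ->
  f (e 1%N) = e 1%N.
Proof.
move=> Hf Hinj Hper He0 Hcl Hfcl Hit.
have q1 : (1 < q)%N by exact: prime_gt1.
have q0 : (0 < q)%N by exact: prime_gt0.
have cl' : forall i j, exists k : 'I_q, e i + e j = e k.
  move=> i j; have [k Hk] := Hcl i j.
  by exists (Ordinal (ltn_pmod k q0)); rewrite Hk /= Hper.
have tor : forall j, e j *+ q = 0.
  move=> j.
  pose sg (i : 'I_q) := odflt i [pick k : 'I_q | e k == e i + e j].
  have sgE : forall i, e (sg i) = e i + e j.
    move=> i; rewrite /sg; case: pickP => [k /eqP //|H].
    by have [k Hk] := cl' i j; have := H k; rewrite Hk eqxx.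
  have sginj : injective sg.
    move=> i i' H; apply/val_inj/Hinj; rewrite ?ltn_ord //; apply: (addIr (e j)).
    by rewrite -!sgE H.
  have := reindex_inj (op := +%R) (x := 0) (P := predT) (F := fun i : 'I_q => e i) sginj.
  rewrite /=.
  under [X in _ = X -> _]eq_bigr => i _ do rewrite sgE.
  rewrite big_split /= sumr_const card_ord => /eqP.
  by rewrite -subr_eq0 opprD addrA subrr add0r oppr_eq0 => /eqP.
set x := e 1%N.
have x0 : x != 0.
  by apply/eqP => H; have := Hinj 1%N 0%N q1 q0; rewrite He0 => /(_ H).
have torx : x *+ q = 0 by exact: tor.
have mult : forall n, exists k : 'I_q, e k = x *+ n.
  elim=> [|n [k Hk]].
    by exists (Ordinal q0); rewrite He0.
  have [k' Hk'] := cl' 1%N k; exists k'.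
  by rewrite mulrS -Hk' Hk.
have dist : forall n m, (n < q)%N -> (m < q)%N -> x *+ n = x *+ m -> n = m.
  move=> n m Hn Hm H.
  have := (Fq_nat_eq n m).1 (sc_inj torx x0 (etrans (sc_nat n torx) (etrans H (esym (sc_nat m torx))))).
  by rewrite !modn_small.
pose h (n : 'I_q) := odflt n [pick k : 'I_q | e k == x *+ n].
have hE : forall n, e (h n) = x *+ n.
  move=> n; rewrite /h; case: pickP => [k /eqP //|H].
  by have [k Hk] := mult n; have := H k; rewrite Hk eqxx.
have hinj : injective h.
    by move=> n m H; apply/val_inj/dist; rewrite ?ltn_ord // -!hE H.
have all_mult : forall i, exists n, e i = x *+ n.
  move=> i; have := inj_card_onto hinj (leqnn _) (Ordinal (ltn_pmod i q0)).
  case/codomP => n Hn; exists n; rewrite Hper -hE -Hn //.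
have [n Hn] : exists n, f x = x *+ n.
  by have [k Hk] := Hfcl 1%N; have [n Hn] := all_mult k; exists n; rewrite Hk.
have itE : forall m, iter m f x = x *+ (n ^ m)%N.
  elim=> [|m IH]; first by rewrite expn0.
  by rewrite iterS IH addfMn // Hn -mulrnA expnS mulnC.
move: Hit; rewrite -/x itE => H2; rewrite Hn -[in RHS]H2.
apply: tor_eq => //; symmetry; exact: fermat_n.
Qed.

Lemma cyc_lin (e : nat -> N) (f : N -> N) :
  is_addf f -> f (e 1%N) = e 1%N -> e 0%N = 0 ->
  (forall n, e n.+1 = e 1%N + f (e n)) -> forall n, e n = e 1%N *+ n.
Proof.
move=> Hf H1 H0 HS; elim=> [|n IH]; first by rewrite H0.
by rewrite HS IH addfMn // H1 mulrS.
Qed.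
End Prime.


Lemma gen_ind (T : finGroupType) (S : {set T}) (P : T -> Prop) :
  P 1%g -> (forall x g, x \in S -> g \in <<S>>%g -> P g -> P (x * g)%g) ->
  forall g, g \in <<S>>%g -> P g.
Proof.
move=> H1 HM g /gen_prodgP [n [c Hc ->]].
elim: n c Hc => [|n IH] c Hc; first by rewrite big_ord0.
rewrite big_ord_recl; apply: HM; first exact: Hc.
  by apply: group_prod => i _; apply: mem_gen.
by apply: IH => i.
Qed.

Definition v3 (F : fieldType) (x y z : F) : 'cV[F]_3 :=
  \col_(i < 3) (if i == 0 :> nat then x else if i == 1 :> nat then y else z).

Lemma v3E (F : fieldType) (m : 'cV[F]_3) : m = v3 (m 0 0) (m 1 0) (m 2 0).
Proof.
apply/matrixP => i j; rewrite !mxE ord1.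
by case: i => [[|[|[|//]]] Hi]; congr (m _ _); apply/val_inj.
Qed.

Lemma v3_inj (F : fieldType) (x y z x' y' z' : F) :
  v3 x y z = v3 x' y' z' -> [/\ x = x', y = y' & z = z'].
Proof.
move=> H; have := congr1 (fun m : 'cV_3 => m 0 0) H; have := congr1 (fun m : 'cV_3 => m 1 0) H.
have := congr1 (fun m : 'cV_3 => m 2 0) H; rewrite !mxE /=. by [].
Qed.

Lemma v3D (F : fieldType) (x y z x' y' z' : F) :
  v3 x y z + v3 x' y' z' = v3 (x + x') (y + y') (z + z').
Proof. by apply/matrixP => i j; rewrite !mxE; case: ifP => //; case: ifP. Qed.

Lemma v3N (F : fieldType) (x y z : F) : - v3 x y z = v3 (- x) (- y) (- z).
Proof. by apply/matrixP => i j; rewrite !mxE; case: ifP => //; case: ifP. Qed.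

Lemma v30 (F : fieldType) : v3 0 0 0 = 0 :> 'cV[F]_3.
Proof. by apply/matrixP => i j; rewrite !mxE; case: ifP => //; case: ifP. Qed.

Lemma det2 (F : comRingType) (A : 'M[F]_2) : \det A = A 0 0 * A 1 1 - A 0 1 * A 1 0.
Proof.
rewrite (expand_det_row A 0) !big_ord_recr big_ord0 /= /cofactor !det_mx11 !mxE /=.
rewrite add0r expr0 expr1 mul1r mulN1r mulrN.
congr (A _ _ * A _ _ - A _ _ * A _ _); apply/val_inj => //.
Qed.

Lemma blkE (F : fieldType) (Y : 'M[F]_2) (i j : 'I_3) :
  (block_mx (1%:M : 'M[F]_1) 0 0 Y : 'M_(1+2)) i j =
  if i == 0 :> nat then (if j == 0 :> nat then 1 else 0)
  else if j == 0 :> nat then 0 else Y (inord i.-1) (inord j.-1).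
Proof.
rewrite [LHS]mxE; case: splitP => k Hk; rewrite !mxE; case: splitP => l Hl; rewrite ?mxE; rewrite Hk Hl.
- by rewrite !ord1.
- by rewrite ord1.
- by rewrite ord1.
- by rewrite /= !inord_val.
Qed.

Lemma actAv (F : fieldType) (gT : finGroupType) (Delta : {perm gT} -> 'M[F]_2) a x y z :
  actA_M Delta a (v3 x y z) =
  v3 (\det (Delta a) * x)
     (\det (Delta a) * ((Delta a^-1)%g 0 0 * y + (Delta a^-1)%g 1 0 * z))
     (\det (Delta a) * ((Delta a^-1)%g 0 1 * y + (Delta a^-1)%g 1 1 * z)).
Proof.
apply/matrixP => i j; rewrite /actA_M !mxE !big_ord_recr big_ord0 /= !blkE !mxE /= add0r.
have i0 : (inord 0 : 'I_2) = 0 by apply/val_inj; rewrite /= inordK.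
have i1 : (inord 1 : 'I_2) = 1 by apply/val_inj; rewrite /= inordK.
by case: i => [[|[|[|//]]] Hi] /=; rewrite ?mulr0 ?mul0r ?mulr1 ?mul1r ?addr0 ?add0r ?i0 ?i1.
Qed.

Section Main.
Variables (q : nat) (zeta : int) (gT : finGroupType) (D : {group gT})
  (d1 d2 d3 : gT) (tau alpha1 alpha2 : {perm gT})
  (Delta : {perm gT} -> 'M['F_q]_2) (rho : gT -> 'M['F_q]_3) (chi : gT -> 'cV['F_q]_3).
Hypotheses (Hq : prime q) (Hq4 : (q %% 4 = 1)%N)
  (Hz : (q.-1).-primitive_root (zeta%:~R : 'F_q))
  (HD : #|D| = (q ^ 3)%N) (HDg : D :=: <<[set d1; d2; d3]>>%g)
  (Ho1 : #[d1]%g = q) (Ho2 : #[d2]%g = q) (Ho3 : #[d3]%g = q)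
  (Hc : d3 \in 'Z(D)%g) (Hrel : (d1^-1 * d2 * d1)%g = (d2 * d3)%g)
  (HtA : tau \in Aut D) (H1A : alpha1 \in Aut D) (H2A : alpha2 \in Aut D)
  (Ht1 : tau d1 = d2) (Ht2 : tau d2 = d1) (Ht3 : tau d3 = (d3^-1)%g)
  (Ha11 : alpha1 d1 = zexpg d1 zeta) (Ha12 : alpha1 d2 = d2) (Ha13 : alpha1 d3 = zexpg d3 zeta)
  (Ha21 : alpha2 d1 = d1) (Ha22 : alpha2 d2 = zexpg d2 zeta) (Ha23 : alpha2 d3 = zexpg d3 zeta).
Let A := <<[set tau; alpha1; alpha2]>>%g.
Hypotheses
  (HDel : forall a b, a \in A -> b \in A -> Delta (b * a)%g = (Delta a *m Delta b)%R)
  (HDt : Delta tau = swap2 _) (HD1 : Delta alpha1 = diag2 (zeta%:~R) 1%R)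
  (HD2 : Delta alpha2 = diag2 1%R (zeta%:~R))
  (Hrho : forall g h, g \in D -> h \in D -> rho (g * h)%g = (rho g *m rho h)%R)
  (Hr1 : rho d1 = matX1 _) (Hr2 : rho d2 = matX2 _) (Hr3 : rho d3 = 1%R)
  (Hchi : forall n1 n2 n3 : nat, chi (d1 ^+ n1 * d2 ^+ n2 * d3 ^+ n3)%g = chi_val _ n1 n2 n3).

Local Notation F := ('F_q).
Local Notation z := (zeta%:~R : F).

Lemma q_ge5 : (5 <= q)%N.
Proof.
have q1 := prime_gt1 Hq.
have := divn_eq q 4; rewrite Hq4 => Hq'.
case E: (q %/ 4)%N => [|k]; first by move: Hq'; rewrite E /= => Hq1; rewrite Hq1 in q1.
by rewrite Hq' E mulSn addnC addnA.
Qed.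

Lemma d1D : d1 \in D. Proof. by rewrite HDg mem_gen // !inE eqxx. Qed.
Lemma d2D : d2 \in D. Proof. by rewrite HDg mem_gen // !inE eqxx !orbT. Qed.
Lemma d3D : d3 \in D. Proof. by rewrite HDg mem_gen // !inE eqxx !orbT. Qed.

Lemma d3comm g : g \in D -> (d3 * g = g * d3)%g.
Proof. by move=> Hg; have [_ H] := centerP _ _ Hc; exact: H g Hg. Qed.

Lemma d3commn g n : g \in D -> (d3 ^+ n * g = g * d3 ^+ n)%g.
Proof. by move=> Hg; apply/commute_sym/commuteX/commute_sym/d3comm. Qed.

Lemma rel21 : (d2 * d1 = d1 * d2 * d3)%g.
Proof. by rewrite -mulgA -Hrel !mulgA mulgV mul1g. Qed.

Lemma rel21n n : (d2 * d1 ^+ n = d1 ^+ n * d2 * d3 ^+ n)%g.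
Proof.
elim: n => [|n IH]; first by rewrite !expg0 !mulg1 mul1g.
rewrite expgSr mulgA IH -mulgA (d3commn _ d1D) !mulgA -(mulgA _ d2 d1) rel21.
by rewrite !mulgA -expgSr -mulgA -expgS.
Qed.

Lemma nf g : g \in D -> exists a b c, g = (d1 ^+ a * d2 ^+ b * d3 ^+ c)%g.
Proof.
rewrite HDg; move: g; apply: (gen_ind (P := fun g => exists a b c, g = (d1 ^+ a * d2 ^+ b * d3 ^+ c)%g)).
  by exists 0%N, 0%N, 0%N; rewrite !expg0 !mulg1.
move=> x g Hx _ [a [b [c ->]]].
move: Hx; rewrite !inE -orbA => /or3P [] /eqP ->.
- by exists a.+1, b, c; rewrite !mulgA expgS.
- exists a, b.+1, (a + c)%N; rewrite !mulgA rel21n expgD expgS !mulgA.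
  by rewrite -(mulgA _ (d3 ^+ a) (d2 ^+ b))%g d3commn ?groupX ?d2D // !mulgA.
- exists a, b, c.+1.
  by rewrite d3comm ?groupM ?groupX ?d1D ?d2D ?d3D // expgSr !mulgA.
Qed.


Lemma tauA : tau \in A. Proof. by rewrite mem_gen // !inE eqxx. Qed.
Lemma al1A : alpha1 \in A. Proof. by rewrite mem_gen // !inE eqxx !orbT. Qed.
Lemma al2A : alpha2 \in A. Proof. by rewrite mem_gen // !inE eqxx !orbT. Qed.

Lemma AAut a : a \in A -> a \in Aut D.
Proof.
move: a; apply/subsetP; rewrite gen_subG; apply/subsetP => x Hx.
have : [|| x == tau, x == alpha1 | x == alpha2] by move: Hx; rewrite !inE -orbA.
by case/or3P => /eqP ->.
Qed.

Lemma autD a x : a \in A -> x \in D -> a x \in D.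
Proof. by move=> Ha Hx; exact: (Aut_closed (AAut Ha) Hx). Qed.

Lemma autM a x y : a \in A -> x \in D -> y \in D -> a (x * y)%g = (a x * a y)%g.
Proof. by move=> Ha Hx Hy; have /morphicP H := Aut_morphic (AAut Ha); apply: H. Qed.

Lemma aut1 a : a \in A -> a 1%g = 1%g.
Proof.
move=> Ha; apply: (mulgI (a 1%g)).
by rewrite mulg1 -autM // mulg1.
Qed.

Lemma autX a x n : a \in A -> x \in D -> a (x ^+ n)%g = (a x ^+ n)%g.
Proof.
move=> Ha Hx; elim: n => [|n IH]; first by rewrite !expg0 aut1.
by rewrite !expgS autM ?groupX // IH.
Qed.

Definition zn : nat := match zeta with Posz n => n | Negz n => (n.+1 * q.-1)%N end.

Lemma zexpgE (x : gT) : #[x]%g = q -> zexpg x zeta = (x ^+ zn)%g.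
Proof.
rewrite /zn /zexpg; case: zeta => n // Hx.
apply/eqP; rewrite eq_invg_mul -expgD addnC -mulnSr prednK ?prime_gt0 //.
by rewrite mulnC expgM -Hx expg_order expg1n.
Qed.

Lemma znE : (zn%:R : F) = z.
Proof.
rewrite /zn; case: zeta => n //.
rewrite NegzE mulrNz natrM -[(q.-1)%:R]/((q.-1)%:R : F).
have -> : ((q.-1)%:R : F) = -1.
  apply/eqP; rewrite -addr_eq0 -mulrSr prednK ?prime_gt0 //.
  by rewrite Fq_nat0.
by rewrite mulrN1.
Qed.

Lemma z_neq0 : z != 0.
Proof.
apply/eqP => H; have := prim_expr_order Hz; rewrite H expr0n.
have -> : (q.-1 == 0)%N = false by have := q_ge5; case: q => [|[|n]].
by move/eqP; rewrite eq_sym oner_eq0.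
Qed.

Lemma z_neq1 : z != 1.
Proof.
apply/eqP => H; have := prim_order_dvd Hz 1; rewrite expr1 H eqxx.
have := q_ge5; case: q => [|[|[|n]]] //= _; by rewrite dvdn1.
Qed.

Lemma zz_neq1 : z * z != 1.
Proof.
apply/eqP => H; have := prim_order_dvd Hz 2; rewrite expr2 H eqxx.
have := q_ge5; case: q => [|[|[|[|[|n]]]]] //= _ /dvdn_leq; by [].
Qed.

Lemma zi_neq_z : z^-1 != z.
Proof.
apply: contra zz_neq1 => /eqP H.
by rewrite -{1}H mulVf ?z_neq0.
Qed.

Lemma zi_neq1 : z^-1 != 1.
Proof. by apply: contra z_neq1 => /eqP H; rewrite -[z]invrK H invr1. Qed.

Lemma two_neq0 : (2%:R : F) != 0.
Proof.
rewrite Fq_nat0 //; apply/negP => /(dvdn_leq (isT : (0 < 2)%N)) H2.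
by have := leq_trans q_ge5 H2.
Qed.


Lemma swap_sq : swap2 F *m swap2 F = 1%:M.
Proof.
apply/matrixP => i j; rewrite !mxE !big_ord_recr big_ord0 /= !mxE.
by case: i => [[|[|//]] ?]; case: j => [[|[|//]] ?] /=; rewrite ?mul0r ?mulr0 ?mul1r ?add0r ?addr0.
Qed.

Lemma diag_mul (x y x' y' : F) : diag2 x y *m diag2 x' y' = diag2 (x * x') (y * y').
Proof.
apply/matrixP => i j; rewrite !mxE !big_ord_recr big_ord0 /= !mxE.
by case: i => [[|[|//]] ?]; case: j => [[|[|//]] ?] /=; rewrite ?mul0r ?mulr0 ?mul1r ?add0r ?addr0.
Qed.

Lemma diag11 : diag2 (1 : F) 1 = 1%:M.
Proof.
apply/matrixP => i j; rewrite !mxE.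
by case: i => [[|[|//]] ?]; case: j => [[|[|//]] ?].
Qed.

Lemma det_swap : \det (swap2 F) = -1.
Proof. by rewrite det2 !mxE /= mul0r mul1r sub0r. Qed.

Lemma det_diag2 (x y : F) : \det (diag2 x y) = x * y.
Proof. by rewrite det2 !mxE /= mul0r subr0. Qed.

Lemma Delta1 : Delta 1%g = 1.
Proof.
have := HDel (group1 A) tauA; rewrite mulg1 HDt => H.
have H1 : Delta 1%g *m (swap2 F *m swap2 F) = swap2 F *m swap2 F by rewrite mulmxA -H.
by rewrite swap_sq mulmx1 in H1.
Qed.

Lemma Delta_inv a P Q : a \in A -> Delta a = P -> P *m Q = 1%:M -> Delta (a^-1)%g = Q.
Proof.
move=> Ha HP HPQ; have := HDel (groupVr Ha) Ha; rewrite mulgV Delta1 HP => H.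
have H1 : Delta (a^-1)%g *m (P *m Q) = Q by rewrite mulmxA -H mul1mx.
by rewrite HPQ mulmx1 in H1.
Qed.

Lemma tauv u v w : actA_M Delta tau (v3 u v w) = v3 (- u) (- w) (- v).
Proof.
rewrite actAv (Delta_inv tauA HDt swap_sq) HDt det_swap !mxE /=.
by rewrite !mul0r !mul1r add0r addr0 !mulN1r.
Qed.

Lemma al1v u v w : actA_M Delta alpha1 (v3 u v w) = v3 (z * u) v (z * w).
Proof.
have HPQ : diag2 z 1 *m diag2 z^-1 1 = 1 by rewrite diag_mul mulfV ?z_neq0 // mulr1 diag11.
rewrite actAv (Delta_inv al1A HD1 HPQ) HD1 det_diag2 !mxE /=.
rewrite !mul0r !mul1r add0r addr0 mulr1 mulrA mulfV ?z_neq0 //.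
by rewrite mul1r.
Qed.

Lemma al2v u v w : actA_M Delta alpha2 (v3 u v w) = v3 (z * u) (z * v) w.
Proof.
have HPQ : diag2 1 z *m diag2 1 z^-1 = 1 by rewrite diag_mul mulfV ?z_neq0 // mulr1 diag11.
rewrite actAv (Delta_inv al2A HD2 HPQ) HD2 det_diag2 !mxE /=.
by rewrite !mul0r !mul1r add0r addr0 mulrA mulfV ?z_neq0 // mul1r.
Qed.


Lemma mul_d2_nf a b c :
  (d2 * (d1 ^+ a * d2 ^+ b * d3 ^+ c) = d1 ^+ a * d2 ^+ (b + 1) * d3 ^+ (a + c))%g.
Proof.
rewrite addn1 !mulgA rel21n expgD expgS !mulgA.
by rewrite -(mulgA _ (d3 ^+ a) (d2 ^+ b))%g d3commn ?groupX ?d2D // !mulgA.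
Qed.

Lemma mul_d3_nf a b c :
  (d3 * (d1 ^+ a * d2 ^+ b * d3 ^+ c) = d1 ^+ a * d2 ^+ b * d3 ^+ (c + 1))%g.
Proof. by rewrite d3comm ?groupM ?groupX ?d1D ?d2D ?d3D // addn1 expgSr !mulgA. Qed.

Lemma mul_d1_nf a b c :
  (d1 * (d1 ^+ a * d2 ^+ b * d3 ^+ c) = d1 ^+ (a + 1) * d2 ^+ b * d3 ^+ c)%g.
Proof. by rewrite addn1 !mulgA expgS. Qed.

Lemma rho1 : rho 1%g = 1%:M.
Proof. by have := Hrho (group1 D) d3D; rewrite mul1g Hr3 mulmx1 => <-. Qed.

Lemma matX1v u v w : matX1 F *m v3 u v w = v3 (u + v) v w.
Proof.
apply/matrixP => i j; rewrite !mxE !big_ord_recr big_ord0 /= !mxE.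
by case: i => [[|[|[|//]]] ?] /=; rewrite ?mul0r ?mulr0 ?mul1r ?add0r ?addr0.
Qed.

Lemma matX2v u v w : matX2 F *m v3 u v w = v3 (u + w) v w.
Proof.
apply/matrixP => i j; rewrite !mxE !big_ord_recr big_ord0 /= !mxE.
by case: i => [[|[|[|//]]] ?] /=; rewrite ?mul0r ?mulr0 ?mul1r ?add0r ?addr0.
Qed.

Lemma rhoM g h (m : 'cV[F]_3) : g \in D -> h \in D -> rho (g * h)%g *m m = rho g *m (rho h *m m).
Proof. by move=> Hg Hh; rewrite Hrho // mulmxA. Qed.

Lemma rhoX1 n u v w : rho (d1 ^+ n)%g *m v3 u v w = v3 (u + n%:R * v) v w.
Proof.
elim: n u => [|n IH] u; first by rewrite expg0 rho1 mul1mx mul0r addr0.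
rewrite expgS rhoM ?groupX ?d1D // IH Hr1 matX1v mulrS.
by congr v3; ring.
Qed.

Lemma rhoX2 n u v w : rho (d2 ^+ n)%g *m v3 u v w = v3 (u + n%:R * w) v w.
Proof.
elim: n u => [|n IH] u; first by rewrite expg0 rho1 mul1mx mul0r addr0.
rewrite expgS rhoM ?groupX ?d2D // IH Hr2 matX2v mulrS.
by congr v3; ring.
Qed.

Lemma rhoX3 n (m : 'cV[F]_3) : rho (d3 ^+ n)%g *m m = m.
Proof.
elim: n => [|n IH]; first by rewrite expg0 rho1 mul1mx.
by rewrite expgS rhoM ?groupX ?d3D // IH Hr3 mul1mx.
Qed.

Lemma rho_nf a b c u v w :
  rho (d1 ^+ a * d2 ^+ b * d3 ^+ c)%g *m v3 u v w = v3 (u + a%:R * v + b%:R * w) v w.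
Proof.
rewrite rhoM ?groupM ?groupX ?d1D ?d2D ?d3D // rhoX3 rhoM ?groupX ?d1D ?d2D //.
by rewrite rhoX2 rhoX1; congr v3; ring.
Qed.

Lemma chi_nf a b c : chi (d1 ^+ a * d2 ^+ b * d3 ^+ c)%g =
  v3 (c%:R - a%:R * b%:R / 2%:R) (- (b%:R / 2%:R)) (a%:R / 2%:R).
Proof. exact: Hchi. Qed.

Lemma chi1 : chi 1%g = 0.
Proof.
have := chi_nf 0 0 0; rewrite !expg0 !mulg1 => ->.
by rewrite !mul0r subr0 oppr0 v30.
Qed.

Lemma chi_d1n n : chi (d1 ^+ n)%g = v3 0 0 (n%:R / 2%:R).
Proof. by have := chi_nf n 0 0; rewrite !expg0 !mulg1 => ->; rewrite !mulr0 !mul0r subr0 oppr0. Qed.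

Lemma chi_d2n n : chi (d2 ^+ n)%g = v3 0 (- (n%:R / 2%:R)) 0.
Proof. by have := chi_nf 0 n 0; rewrite !expg0 mulg1 mul1g => ->; rewrite !mul0r subr0. Qed.

Lemma chi_d3n n : chi (d3 ^+ n)%g = v3 n%:R 0 0.
Proof. by have := chi_nf 0 0 n; rewrite !expg0 !mul1g => ->; rewrite !mul0r subr0 oppr0. Qed.

Lemma chi_gen x h : x \in [set d1; d2; d3] -> h \in D ->
  chi (x * h)%g = chi x + rho x *m chi h.
Proof.
move=> Hx Hh; have [a [b [c ->]]] := nf Hh.
have : [|| x == d1, x == d2 | x == d3] by move: Hx; rewrite !inE -orbA.
have t0 := two_neq0.
case/or3P => /eqP ->.
- rewrite mul_d1_nf !chi_nf -(expg1 d1) chi_d1n expg1 Hr1 matX1v v3D natrD.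
  by congr v3; field.
- rewrite mul_d2_nf !chi_nf -(expg1 d2) chi_d2n expg1 Hr2 matX2v v3D !natrD.
  by congr v3; field.
- rewrite mul_d3_nf !chi_nf -(expg1 d3) chi_d3n expg1 Hr3 mul1mx v3D !natrD.
  by congr v3; field.
Qed.

Lemma chi_coc g h : g \in D -> h \in D -> chi (g * h)%g = chi g + rho g *m chi h.
Proof.
move=> Hg; have Hg' : g \in <<[set d1; d2; d3]>>%g by rewrite -HDg.
move: g Hg' {Hg} h.
apply: (gen_ind (P := fun g => forall h, h \in D -> chi (g * h)%g = chi g + rho g *m chi h)).
  by move=> h Hh; rewrite mul1g chi1 rho1 mul1mx add0r.
move=> x g Hx Hg IH h Hh.
have xD : x \in D by rewrite HDg mem_gen.
rewrite -HDg in Hg.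
have E1 := chi_gen Hx (groupM Hg Hh); have E2 := chi_gen Hx Hg.
by rewrite -mulgA E1 E2 IH // mulmxDr addrA rhoM.
Qed.


Lemma actA_add a (m m' : 'cV[F]_3) : actA_M Delta a (m + m') = actA_M Delta a m + actA_M Delta a m'.
Proof. by rewrite /actA_M mulmxDr scalerDr. Qed.

Lemma actA0 a : actA_M Delta a 0 = 0.
Proof. by rewrite /actA_M mulmx0 scaler0. Qed.

Lemma actA1 (m : 'cV[F]_3) : actA_M Delta 1%g m = m.
Proof.
rewrite [m]v3E actAv invg1 Delta1 det1 !mxE /=.
by rewrite !mul1r !mul0r addr0 add0r.
Qed.

Lemma blk_mul (X Y : 'M[F]_2) :
  block_mx (1%:M : 'M[F]_1) 0 0 (X *m Y) = block_mx 1%:M 0 0 X *m block_mx 1%:M 0 0 Y.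
Proof. by rewrite mulmx_block !mulmx0 !mul0mx !addr0 !add0r mulmx1. Qed.

Lemma actA_law a b (m : 'cV[F]_3) : a \in A -> b \in A ->
  actA_M Delta (b * a)%g m = actA_M Delta a (actA_M Delta b m).
Proof.
move=> Ha Hb; rewrite /actA_M HDel // invMg HDel ?groupV // det_mulmx trmx_mul blk_mul.
by rewrite -scalemxAr scalerA mulmxA mulrC.
Qed.

Lemma actA_gen a x (m : 'cV[F]_3) : a \in [set tau; alpha1; alpha2] -> x \in [set d1; d2; d3] ->
  actA_M Delta a (rho x *m m) = rho (a x) *m actA_M Delta a m.
Proof.
move=> Ha Hx; rewrite [m]v3E; move: (m 0 0) (m 1 0) (m 2 0) => u v w.
have : [|| a == tau, a == alpha1 | a == alpha2] by move: Ha; rewrite !inE -orbA.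
have : [|| x == d1, x == d2 | x == d3] by move: Hx; rewrite !inE -orbA.
have r3i : rho (d3^-1)%g = 1%:M.
  by have := Hrho (groupVr d3D) d3D; rewrite mulVg rho1 Hr3 mulmx1 => <-.
case/or3P => /eqP ->; case/or3P => /eqP ->.
- by rewrite Hr1 matX1v !tauv Ht1 Hr2 matX2v opprD.
- rewrite Hr1 matX1v !al1v Ha11 zexpgE // rhoX1 znE.
  by congr v3; ring.
- by rewrite Hr1 matX1v !al2v Ha21 Hr1 matX1v mulrDr.
- by rewrite Hr2 matX2v !tauv Ht2 Hr1 matX1v opprD.
- by rewrite Hr2 matX2v !al1v Ha12 Hr2 matX2v mulrDr.
- rewrite Hr2 matX2v !al2v Ha22 zexpgE // rhoX2 znE.
  by congr v3; ring.
- by rewrite Hr3 mul1mx !tauv Ht3 r3i mul1mx.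
- by rewrite Hr3 mul1mx !al1v Ha13 zexpgE // rhoX3.
- by rewrite Hr3 mul1mx !al2v Ha23 zexpgE // rhoX3.
Qed.

Lemma actA_rho a g (m : 'cV[F]_3) : a \in A -> g \in D ->
  actA_M Delta a (rho g *m m) = rho (a g) *m actA_M Delta a m.
Proof.
move=> Ha; move: a Ha g m.
apply: (gen_ind (P := fun a => forall g (m : 'cV[F]_3), g \in D ->
  actA_M Delta a (rho g *m m) = rho (a g) *m actA_M Delta a m)).
  by move=> g m Hg; rewrite !actA1 perm1.
move=> b a Hb Ha IH g m Hg.
have bA : b \in A by rewrite mem_gen.
have Hg' : g \in <<[set d1; d2; d3]>>%g by rewrite -HDg.
rewrite !actA_law // permM.
move: g Hg' Hg m.
apply: (gen_ind (P := fun g => g \in D -> forall (m : 'cV[F]_3),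
  actA_M Delta a (actA_M Delta b (rho g *m m)) = rho (a (b g)) *m actA_M Delta a (actA_M Delta b m))).
  by move=> _ m; rewrite (aut1 bA) (aut1 Ha) rho1 !mul1mx.
move=> x g Hx Hg IHg xgD m.
have xD : x \in D by rewrite HDg mem_gen.
have gD : g \in D by rewrite HDg.
rewrite (rhoM _ xD gD) (actA_gen _ Hb Hx) (IH (b x) _ (autD bA xD)) (IHg gD).
rewrite (autM bA xD gD) (autM Ha (autD bA xD) (autD bA gD)).
by rewrite (rhoM _ (autD Ha (autD bA xD)) (autD Ha (autD bA gD))).
Qed.


Lemma qm1 : ((q.-1)%:R : F) = -1.
Proof.
apply/eqP; rewrite -addr_eq0 -mulrSr prednK ?prime_gt0 //.
by rewrite Fq_nat0.
Qed.

Lemma chid1 : chi d1 = v3 0 0 (1%:R / 2%:R).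
Proof. by rewrite -(expg1 d1) chi_d1n. Qed.
Lemma chid2 : chi d2 = v3 0 (- (1%:R / 2%:R)) 0.
Proof. by rewrite -(expg1 d2) chi_d2n. Qed.
Lemma chid3 : chi d3 = v3 1 0 0.
Proof. by rewrite -(expg1 d3) chi_d3n. Qed.
Lemma chid3i : chi (d3^-1)%g = v3 (-1) 0 0.
Proof. by rewrite invg_expg Ho3 chi_d3n qm1. Qed.

Lemma chi_gen_eq a x : a \in [set tau; alpha1; alpha2] -> x \in [set d1; d2; d3] ->
  chi (a x) = actA_M Delta a (chi x).
Proof.
move=> Ha Hx.
have : [|| a == tau, a == alpha1 | a == alpha2] by move: Ha; rewrite !inE -orbA.
have : [|| x == d1, x == d2 | x == d3] by move: Hx; rewrite !inE -orbA.
case/or3P => /eqP ->; case/or3P => /eqP ->.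
- by rewrite Ht1 chid1 chid2 tauv; congr v3; ring.
- by rewrite Ha11 zexpgE // chi_d1n chid1 al1v znE; congr v3; ring.
- by rewrite Ha21 chid1 al2v; congr v3; ring.
- by rewrite Ht2 chid1 chid2 tauv; congr v3; ring.
- by rewrite Ha12 chid2 al1v; congr v3; ring.
- by rewrite Ha22 zexpgE // chi_d2n chid2 al2v znE; congr v3; ring.
- by rewrite Ht3 chid3i chid3 tauv; congr v3; ring.
- by rewrite Ha13 zexpgE // chi_d3n chid3 al1v znE; congr v3; ring.
- by rewrite Ha23 zexpgE // chi_d3n chid3 al2v znE; congr v3; ring.
Qed.

Lemma chi_equiv a g : a \in A -> g \in D -> chi (a g) = actA_M Delta a (chi g).
Proof.
move=> Ha; move: a Ha g.
apply: (gen_ind (P := fun a : {perm gT} => forall g, g \in D -> chi (a g) = actA_M Delta a (chi g))).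
  by move=> g _; rewrite perm1 actA1.
move=> b a Hb Ha IH g Hg.
have bA : b \in A by rewrite mem_gen.
have Hg' : g \in <<[set d1; d2; d3]>>%g by rewrite -HDg.
rewrite actA_law // permM IH ?(autD bA) //; congr (actA_M Delta a).
move: g Hg' Hg.
apply: (gen_ind (P := fun g => g \in D -> chi (b g) = actA_M Delta b (chi g))).
  by move=> _; rewrite (aut1 bA) chi1 actA0.
move=> x g Hx Hg IHg xgD.
have xD : x \in D by rewrite HDg mem_gen.
have gD : g \in D by rewrite HDg.
rewrite (autM bA xD gD) (chi_coc (autD bA xD) (autD bA gD)) (chi_gen_eq Hb Hx) (IHg gD).
by rewrite -(actA_rho _ bA xD) -actA_add -chi_coc.
Qed.

Lemma nat_half a a' : (a%:R / 2%:R : F) = a'%:R / 2%:R -> (a%:R : F) = a'%:R.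
Proof. by move=> H; apply: (mulIf (invr_neq0 two_neq0)). Qed.

Lemma chi_inj : {in D &, injective chi}.
Proof.
move=> g h Hg Hh; have [a [b [c ->]]] := nf Hg; have [a' [b' [c' ->]]] := nf Hh.
rewrite !chi_nf => /v3_inj [H3 H2 H1].
have Ea := nat_half H1.
have Eb : (b%:R : F) = b'%:R by apply: nat_half; apply: oppr_inj.
have Ec : (c%:R : F) = c'%:R.
  by move: H3; rewrite Ea Eb => /addIr.
move: ((Fq_nat_eq Hq a a').1 Ea) ((Fq_nat_eq Hq b b').1 Eb) ((Fq_nat_eq Hq c c').1 Ec).
move=> {}Ea {}Eb {}Ec.
rewrite -(expg_mod_order d1 a) -(expg_mod_order d1 a') -(expg_mod_order d2 b) -(expg_mod_order d2 b').
by rewrite -(expg_mod_order d3 c) -(expg_mod_order d3 c') Ho1 Ho2 Ho3 Ea Eb Ec.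
Qed.

Lemma chi_surj (m : 'cV[F]_3) : exists2 g, g \in D & chi g = m.
Proof.
rewrite [m]v3E; move: (m 0 0) (m 1 0) (m 2 0) => x y w.
set a := val (2%:R * w); set b := val (- (2%:R * y)).
set c := val (x + (a%:R * b%:R / 2%:R : F)).
exists (d1 ^+ a * d2 ^+ b * d3 ^+ c)%g; first by rewrite !groupM ?groupX ?d1D ?d2D ?d3D.
rewrite chi_nf /c valFq /b valFq /a valFq.
have t0 := two_neq0.
by congr v3; field.
Qed.

Lemma existence : IYB_structure D A (fun g m => (rho g *m m)%R) (actA_M Delta) chi.
Proof.
split.
- split; split.
  + by move=> g _ m m'; rewrite mulmxDr.
  + by move=> m; rewrite rho1 mul1mx.
  + by move=> g h Hg Hh m; rewrite rhoM.
  + by move=> a _ m m'; rewrite actA_add.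
  + by move=> m; rewrite actA1.
  + by move=> a b Ha Hb m; rewrite actA_law.
  + by move=> a g Ha Hg m; rewrite actA_rho.
- by move=> g h Hg Hh; rewrite chi_coc.
- exact: chi_inj.
- exact: chi_surj.
- by move=> a g Ha Hg; rewrite chi_equiv.
Qed.


Lemma mul_eq0_neq (s t x : F) : s != t -> s * x = t * x -> x = 0.
Proof.
move=> Hst H; have : (s - t) * x == 0 by rewrite mulrBl H subrr.
by rewrite mulf_eq0 subr_eq0 (negPf Hst) /= => /eqP.
Qed.

Lemma gam_A : (alpha1 * alpha2^-1)%g \in A.
Proof. by rewrite groupM ?groupV ?al1A ?al2A. Qed.

Lemma gam_d3 : (alpha1 * alpha2^-1)%g d3 = d3.
Proof. by rewrite permM Ha13 -Ha23 permK. Qed.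

Lemma chi_coords g : exists x y w, chi g = v3 x y w.
Proof. by exists (chi g 0 0), (chi g 1 0), (chi g 2 0); exact: v3E. Qed.

Lemma MC2 g : g \in D -> alpha2 g = g -> exists k, g = (d1 ^+ k)%g.
Proof.
move=> Hg Hfix; have := chi_equiv al2A Hg; rewrite Hfix.
have [x [y [w Ev]]] := chi_coords g; rewrite Ev al2v => /v3_inj [Hx Hy _].
have x0 : x = 0 by apply: (@mul_eq0_neq 1 z); rewrite 1?eq_sym ?z_neq1 // mul1r.
have y0 : y = 0 by apply: (@mul_eq0_neq 1 z); rewrite 1?eq_sym ?z_neq1 // mul1r.
exists (val (2%:R * w)); apply: chi_inj; rewrite ?groupX ?d1D //.
rewrite chi_d1n valFq Ev x0 y0; have t0 := two_neq0; by congr v3; field.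
Qed.

Lemma MC1 g : g \in D -> alpha1 g = g -> exists k, g = (d2 ^+ k)%g.
Proof.
move=> Hg Hfix; have := chi_equiv al1A Hg; rewrite Hfix.
have [x [y [w Ev]]] := chi_coords g; rewrite Ev al1v => /v3_inj [Hx _ Hw].
have x0 : x = 0 by apply: (@mul_eq0_neq 1 z); rewrite 1?eq_sym ?z_neq1 // mul1r.
have w0 : w = 0 by apply: (@mul_eq0_neq 1 z); rewrite 1?eq_sym ?z_neq1 // mul1r.
exists (val (- (2%:R * y))); apply: chi_inj; rewrite ?groupX ?d2D //.
rewrite chi_d2n valFq Ev x0 w0; have t0 := two_neq0; by congr v3; field.
Qed.

Lemma MC3 g : g \in D -> (alpha1 * alpha2^-1)%g g = g -> exists k, g = (d3 ^+ k)%g.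
Proof.
move=> Hg; rewrite permM => Hfix.
have H12 : alpha1 g = alpha2 g by rewrite -[in RHS]Hfix permKV.
have := chi_equiv al1A Hg; rewrite H12 chi_equiv ?al2A //.
have [x [y [w Ev]]] := chi_coords g; rewrite Ev al1v al2v => /v3_inj [_ Hy Hw].
have y0 : y = 0 by apply: (@mul_eq0_neq 1 z); [rewrite eq_sym z_neq1 | rewrite mul1r Hy].
have w0 : w = 0 by apply: (@mul_eq0_neq 1 z); [rewrite eq_sym z_neq1 | rewrite mul1r].
exists (val x); apply: chi_inj; rewrite ?groupX ?d3D //.
by rewrite chi_d3n valFq Ev y0 w0.
Qed.



Section Uniq.
Variables (N : zmodType) (lam : gT -> N -> N) (al : {perm gT} -> N -> N) (c : gT -> N).
Hypothesis HI : IYB_structure D A lam al c.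

Lemma lamA g : g \in D -> is_addf (lam g).
Proof. by case: HI => [[[H _ _] _] _ _ _ _] Hg a b; apply: H. Qed.
Lemma lam1 m : lam 1%g m = m.
Proof. by case: HI => [[[_ H _] _] _ _ _ _]; apply: H. Qed.
Lemma lamM g h m : g \in D -> h \in D -> lam (g * h)%g m = lam g (lam h m).
Proof. by case: HI => [[[_ _ H] _] _ _ _ _] Hg Hh; apply: H. Qed.
Lemma alA a : a \in A -> is_addf (al a).
Proof. by case: HI => [[_ [H _ _ _]] _ _ _ _] Ha x y; apply: H. Qed.
Lemma al1 m : al 1%g m = m.
Proof. by case: HI => [[_ [_ H _ _]] _ _ _ _]; apply: H. Qed.
Lemma alM a b m : a \in A -> b \in A -> al (b * a)%g m = al a (al b m).
Proof. by case: HI => [[_ [_ _ H _]] _ _ _ _] Ha Hb; apply: H. Qed.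
Lemma al_lam a g m : a \in A -> g \in D -> al a (lam g m) = lam (a g) (al a m).
Proof. by case: HI => [[_ [_ _ _ H]] _ _ _ _] Ha Hg; apply: H. Qed.
Lemma c_coc g h : g \in D -> h \in D -> c (g * h)%g = c g + lam g (c h).
Proof. by case: HI => [_ H _ _ _]; apply: H. Qed.
Lemma c_inj : {in D &, injective c}.
Proof. by case: HI. Qed.
Lemma c_surj w : exists2 g, g \in D & c g = w.
Proof. by case: HI => [_ _ _ H _]; apply: H. Qed.
Lemma c_eq a g : a \in A -> g \in D -> c (a g) = al a (c g).
Proof. by case: HI => [_ _ _ _ H]; apply: H. Qed.

Lemma c1 : c 1%g = 0.
Proof.
have := c_coc (group1 D) (group1 D); rewrite mulg1 lam1 => H.
by apply: (addrI (c 1%g)); rewrite addr0 -H.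
Qed.

Lemma lamX g n m : g \in D -> lam (g ^+ n)%g m = iter n (lam g) m.
Proof. by move=> Hg; elim: n => [|n IH]; rewrite ?expg0 ?lam1 // expgS lamM ?groupX // IH. Qed.

Lemma al_inv a m : a \in A -> al (a^-1)%g (al a m) = m.
Proof. by move=> Ha; rewrite -alM ?groupV // mulgV al1. Qed.

Lemma cyc_d (s : {perm gT}) (d : gT) : s \in A -> d \in D -> #[d]%g = q -> s d = d ->
  (forall g, g \in D -> s g = g -> exists k, g = (d ^+ k)%g) ->
  (forall n, c (d ^+ n)%g = c d *+ n) /\ c d *+ q = 0.
Proof.
move=> Hs Hd Hod Hsd MC.
pose e n := c (d ^+ n)%g.
have fixc : forall w, al s w = w -> exists k, w = e k.
  move=> w Hw; have [g Hg Hgw] := c_surj w.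
  have : c (s g) = c g by rewrite c_eq // Hgw.
  move/(c_inj (autD Hs Hg) Hg) => /(MC _ Hg) [k Hk]; by exists k; rewrite -Hgw Hk.
have efix : forall i, al s (e i) = e i.
  by move=> i; rewrite /e -c_eq ?groupX // autX // Hsd.
have H1 : lam d (e 1%N) = e 1%N.
  apply: (cyc_fix Hq) => //.
  - exact: lamA.
  - move=> i j Hi Hj Hij; have := c_inj (groupX _ Hd) (groupX _ Hd) Hij.
    by move/eqP; rewrite eq_expg_mod_order Hod !modn_small // => /eqP.
  - by move=> n; rewrite /e -{1}(expg_mod_order d n) Hod.
  - by rewrite /e expg0 c1.
  - move=> i j; apply: fixc; by rewrite (alA _) ?efix.
  - move=> i; apply: fixc; by rewrite al_lam // Hsd efix.
  - by rewrite -lamX // -Hod expg_order lam1.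
have cd : e 1%N = c d by rewrite /e expg1.
have Hlin : forall n, e n = e 1%N *+ n.
  apply: (cyc_lin (f := lam d)) => //.
  - exact: lamA.
  - by rewrite /e expg0 c1.
  - by move=> n; rewrite /e expgS c_coc ?groupX // expg1.
split; first by move=> n; rewrite -cd -Hlin.
by rewrite -cd -Hlin /e -Hod expg_order c1.
Qed.


Local Notation x1 := (c d1).
Local Notation x2 := (c d2).
Local Notation x3 := (c d3).

Lemma cx1 : (forall n, c (d1 ^+ n)%g = x1 *+ n) /\ x1 *+ q = 0.
Proof. exact: cyc_d al2A d1D Ho1 Ha21 MC2. Qed.
Lemma cx2 : (forall n, c (d2 ^+ n)%g = x2 *+ n) /\ x2 *+ q = 0.
Proof. exact: cyc_d al1A d2D Ho2 Ha12 MC1. Qed.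
Lemma cx3 : (forall n, c (d3 ^+ n)%g = x3 *+ n) /\ x3 *+ q = 0.
Proof. exact: cyc_d gam_A d3D Ho3 gam_d3 MC3. Qed.

Lemma t1 : x1 *+ q = 0. Proof. exact: cx1.2. Qed.
Lemma t2 : x2 *+ q = 0. Proof. exact: cx2.2. Qed.
Lemma t3 : x3 *+ q = 0. Proof. exact: cx3.2. Qed.

Lemma x_neq0 d : d \in D -> #[d]%g = q -> c d != 0.
Proof.
move=> Hd Ho; apply/eqP => H.
have : d = 1%g by apply: c_inj; rewrite ?group1 // c1.
move=> E; move: Ho; rewrite E order1 => Hq1.
by have := prime_gt1 Hq; rewrite -Hq1.
Qed.

Lemma n1 : x1 != 0. Proof. exact: x_neq0 d1D Ho1. Qed.
Lemma n2 : x2 != 0. Proof. exact: x_neq0 d2D Ho2. Qed.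
Lemma n3 : x3 != 0. Proof. exact: x_neq0 d3D Ho3. Qed.

Lemma zpow_sc (y : N) : y *+ q = 0 -> y *+ zn = sc z y.
Proof. by move=> Hy; rewrite -(sc_nat Hq) // znE. Qed.

Lemma a1x1 : al alpha1 x1 = sc z x1.
Proof. by rewrite -c_eq ?d1D ?al1A // Ha11 zexpgE // cx1.1 zpow_sc // t1. Qed.
Lemma a1x2 : al alpha1 x2 = x2.
Proof. by rewrite -c_eq ?d2D ?al1A // Ha12. Qed.
Lemma a1x3 : al alpha1 x3 = sc z x3.
Proof. by rewrite -c_eq ?d3D ?al1A // Ha13 zexpgE // cx3.1 zpow_sc // t3. Qed.
Lemma a2x1 : al alpha2 x1 = x1.
Proof. by rewrite -c_eq ?d1D ?al2A // Ha21. Qed.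
Lemma a2x2 : al alpha2 x2 = sc z x2.
Proof. by rewrite -c_eq ?d2D ?al2A // Ha22 zexpgE // cx2.1 zpow_sc // t2. Qed.
Lemma a2x3 : al alpha2 x3 = sc z x3.
Proof. by rewrite -c_eq ?d3D ?al2A // Ha23 zexpgE // cx3.1 zpow_sc // t3. Qed.
Lemma atx1 : al tau x1 = x2.
Proof. by rewrite -c_eq ?d1D ?tauA // Ht1. Qed.
Lemma atx2 : al tau x2 = x1.
Proof. by rewrite -c_eq ?d2D ?tauA // Ht2. Qed.
Lemma atx3 : al tau x3 = sc (-1 : F) x3.
Proof.
rewrite -c_eq ?d3D ?tauA // Ht3 invg_expg Ho3 cx3.1 -(sc_nat Hq) ?t3 //.
by rewrite qm1.
Qed.

Definition Psi (a b k : F) := sc a x1 + sc b x2 + sc k x3.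

Lemma PsiD a b k a' b' k' : Psi a b k + Psi a' b' k' = Psi (a + a') (b + b') (k + k').
Proof.
rewrite /Psi !(scD Hq) ?t1 ?t2 ?t3 //.
by rewrite addrACA [X in X + _]addrACA.
Qed.

Lemma PsiN a b k : - Psi a b k = Psi (- a) (- b) (- k).
Proof. by rewrite /Psi !(scN Hq) ?t1 ?t2 ?t3 // !opprD. Qed.

Lemma Psi0 : Psi 0 0 0 = 0.
Proof. by rewrite /Psi !sc0 !addr0. Qed.

Lemma Psi_sc (s : F) a b k : sc s (Psi a b k) = Psi (s * a) (s * b) (s * k).
Proof. by rewrite /Psi !scDr !(scM Hq) ?t1 ?t2 ?t3. Qed.

Lemma Psi_f f a b k : is_addf f -> f (Psi a b k) = sc a (f x1) + sc b (f x2) + sc k (f x3).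
Proof. by move=> Hf; rewrite /Psi !Hf (sc_addf _ _ Hf) (sc_addf _ _ Hf) (sc_addf _ _ Hf). Qed.

Lemma x1E : x1 = Psi 1 0 0. Proof. by rewrite /Psi (sc1 Hq) ?t1 // !sc0 !addr0. Qed.
Lemma x2E : x2 = Psi 0 1 0. Proof. by rewrite /Psi (sc1 Hq) ?t2 // !sc0 addr0 add0r. Qed.
Lemma x3E : x3 = Psi 0 0 1. Proof. by rewrite /Psi (sc1 Hq) ?t3 // !sc0 !add0r. Qed.

Lemma scsc (s t : F) (y : N) : y *+ q = 0 -> sc s (sc t y) = sc (s * t) y.
Proof. by move=> Hy; rewrite (scM Hq). Qed.

Lemma Psi_a1 a b k : al alpha1 (Psi a b k) = Psi (a * z) b (k * z).
Proof. by rewrite (Psi_f _ _ _ (alA al1A)) a1x1 a1x2 a1x3 !scsc ?t1 ?t3. Qed.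
Lemma Psi_a2 a b k : al alpha2 (Psi a b k) = Psi a (b * z) (k * z).
Proof. by rewrite (Psi_f _ _ _ (alA al2A)) a2x1 a2x2 a2x3 !scsc ?t2 ?t3. Qed.
Lemma Psi_tau a b k : al tau (Psi a b k) = Psi b a (- k).
Proof.
rewrite (Psi_f _ _ _ (alA tauA)) atx1 atx2 atx3 scsc ?t3 // mulrN1.
by rewrite /Psi [sc a x2 + _]addrC.
Qed.


Lemma Psi_010 d : Psi 0 d 0 = sc d x2.
Proof. by rewrite /Psi !sc0 addr0 add0r. Qed.
Lemma Psi_100 d : Psi d 0 0 = sc d x1.
Proof. by rewrite /Psi !sc0 !addr0. Qed.
Lemma Psi_001 d : Psi 0 0 d = sc d x3.
Proof. by rewrite /Psi !sc0 !add0r. Qed.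

Lemma Psi0_inj u v w : Psi u v w = 0 -> [/\ u = 0, v = 0 & w = 0].
Proof.
move=> H.
have H1 : Psi (u * z) v (w * z) = 0 by rewrite -Psi_a1 H (addf0 (alA al1A)).
have H2 : Psi u (v * z) (w * z) = 0 by rewrite -Psi_a2 H (addf0 (alA al2A)).
have Hs : Psi (z * u) (z * v) (z * w) = 0 by rewrite -Psi_sc H /sc mul0rn.
have Hd1 : Psi 0 (v - z * v) 0 = 0.
  have E : Psi 0 (v - z * v) 0 = Psi (u * z) v (w * z) + - Psi (z * u) (z * v) (z * w).
    by rewrite PsiN PsiD; congr Psi; ring.
  by rewrite E H1 Hs subrr.
have Hd2 : Psi (u - z * u) 0 0 = 0.
  have E : Psi (u - z * u) 0 0 = Psi u (v * z) (w * z) + - Psi (z * u) (z * v) (z * w).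
    by rewrite PsiN PsiD; congr Psi; ring.
  by rewrite E H2 Hs subrr.
rewrite Psi_010 in Hd1; rewrite Psi_100 in Hd2.
have v0 : v = 0.
  apply: (@mul_eq0_neq 1 z); first by rewrite eq_sym z_neq1.
  by apply/eqP; rewrite mul1r -subr_eq0; apply/eqP; apply: (sc_eq0 Hq t2 n2).
have u0 : u = 0.
  apply: (@mul_eq0_neq 1 z); first by rewrite eq_sym z_neq1.
  by apply/eqP; rewrite mul1r -subr_eq0; apply/eqP; apply: (sc_eq0 Hq t1 n1).
split => //; move: H; rewrite u0 v0 Psi_001; exact: (sc_eq0 Hq t3 n3).
Qed.

Lemma Psi_inj a b k a' b' k' : Psi a b k = Psi a' b' k' -> [/\ a = a', b = b' & k = k'].
Proof.
move=> H; have : Psi (a - a') (b - b') (k - k') = 0 by rewrite -PsiD -PsiN H subrr.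
by case/Psi0_inj => /eqP; rewrite subr_eq0 => /eqP -> /eqP; rewrite subr_eq0 => /eqP -> /eqP; rewrite subr_eq0 => /eqP ->.
Qed.

Lemma Psi_surj w : exists a b k, w = Psi a b k.
Proof.
pose P (t : F * F * F) : gT := odflt 1%g [pick g in D | c g == Psi t.1.1 t.1.2 t.2].
have PE : forall t, P t \in D /\ c (P t) = Psi t.1.1 t.1.2 t.2.
  move=> t; rewrite /P; case: pickP => [g /andP [Hg /eqP ->] //|H].
  have [g Hg Hcg] := c_surj (Psi t.1.1 t.1.2 t.2).
  by have := H g; rewrite Hg Hcg eqxx.
have Pinj : injective P.
  move=> [[a b] k] [[a' b'] k'] H.
  have := (PE (a, b, k)).2; rewrite H (PE (a', b', k')).2 /= => /esym /Psi_inj [-> -> ->] //.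
have sub : P @: setT \subset D.
  by apply/subsetP => g /imsetP [t _ ->]; exact: (PE t).1.
have EP : P @: setT = D.
  apply/eqP; rewrite eqEcard sub /= card_imset // cardsT !card_prod !card_Fp // HD.
  by rewrite !expnS expn0 muln1 mulnA.
have [g Hg <-] := c_surj w.
move: Hg; rewrite -EP => /imsetP [[[a b] k] _ ->].
by exists a, b, k; rewrite (PE (a, b, k)).2.
Qed.


Lemma unip (f : N -> N) (y : N) (s : F) : is_addf f -> y *+ q = 0 -> f y = sc s y ->
  iter q f y = y -> f y = y.
Proof.
move=> Hf Hy Hfy Hit.
have It : forall n, iter n f y = sc (s ^+ n) y.
  elim=> [|n IH]; first by rewrite expr0 (sc1 Hq).
  by rewrite iterS IH (sc_addf _ _ Hf) Hfy scsc // -exprSr.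
by move: Hit; rewrite It (fermat_s Hq) Hfy.
Qed.

Lemma iter_ord d (y : N) : d \in D -> #[d]%g = q -> iter q (lam d) y = y.
Proof. by move=> Hd Ho; rewrite -lamX // -Ho expg_order lam1. Qed.

Lemma Psi_a2i a b k : al (alpha2^-1)%g (Psi a b k) = Psi a (b * z^-1) (k * z^-1).
Proof.
have E : Psi a b k = al alpha2 (Psi a (b * z^-1) (k * z^-1)).
  by rewrite Psi_a2 -!mulrA mulVf ?z_neq0 // !mulr1.
by rewrite E al_inv // al2A.
Qed.

Lemma Psi_gam a b k : al (alpha1 * alpha2^-1)%g (Psi a b k) = Psi (a * z) (b * z^-1) k.
Proof.
rewrite alM ?groupV ?al1A ?al2A // Psi_a1 Psi_a2i -mulrA mulfV ?z_neq0 //.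
by rewrite mulr1.
Qed.

Lemma gam_lam m : al (alpha1 * alpha2^-1)%g (lam d3 m) = lam d3 (al (alpha1 * alpha2^-1)%g m).
Proof. by rewrite al_lam ?gam_A ?d3D // gam_d3. Qed.

Lemma f3x1 : lam d3 x1 = x1.
Proof.
have [a [b [k E]]] := Psi_surj (lam d3 x1).
have H : al (alpha1 * alpha2^-1)%g (lam d3 x1) = sc z (lam d3 x1).
  rewrite gam_lam [X in al _ X]x1E Psi_gam mul0r mul1r Psi_100.
  by rewrite (sc_addf _ _ (lamA d3D)).
rewrite E Psi_gam Psi_sc in H; case/Psi_inj: H => _ Hb Hk.
have b0 : b = 0 by apply: (@mul_eq0_neq z^-1 z); rewrite ?zi_neq_z // mulrC.
have k0 : k = 0 by apply: (@mul_eq0_neq 1 z); rewrite 1?eq_sym ?z_neq1 // mul1r.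
apply: (@unip (lam d3) x1 a (lamA d3D) t1).
- by rewrite E b0 k0 Psi_100.
- exact: iter_ord d3D Ho3.
Qed.

Lemma f3x2 : lam d3 x2 = x2.
Proof.
have [a [b [k E]]] := Psi_surj (lam d3 x2).
have H : al (alpha1 * alpha2^-1)%g (lam d3 x2) = sc z^-1 (lam d3 x2).
  rewrite gam_lam [X in al _ X]x2E Psi_gam mul0r mul1r Psi_010.
  by rewrite (sc_addf _ _ (lamA d3D)).
rewrite E Psi_gam Psi_sc in H; case/Psi_inj: H => Ha _ Hk.
have a0 : a = 0 by apply: (@mul_eq0_neq z z^-1); rewrite 1?eq_sym ?zi_neq_z // mulrC.
have k0 : k = 0 by apply: (@mul_eq0_neq 1 z^-1); rewrite 1?eq_sym ?zi_neq1 // mul1r.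
apply: (@unip (lam d3) x2 b (lamA d3D) t2).
- by rewrite E a0 k0 Psi_010.
- exact: iter_ord d3D Ho3.
Qed.

Lemma f1x3 : lam d1 x3 = x3.
Proof.
have := congr1 c (d3comm d1D).
rewrite !c_coc ?d1D ?d3D // f3x1 addrC => /addrI.
by [].
Qed.

Lemma f2x3 : lam d2 x3 = x3.
Proof.
have := congr1 c (d3comm d2D).
rewrite !c_coc ?d2D ?d3D // f3x2 addrC => /addrI.
by [].
Qed.

Lemma f1x1 : lam d1 x1 = x1.
Proof.
have := cx1.1 2; rewrite mulr2n expgS expg1 c_coc ?d1D // => /addrI.
by [].
Qed.

Lemma f2x2 : lam d2 x2 = x2.
Proof.
have := cx2.1 2; rewrite mulr2n expgS expg1 c_coc ?d2D // => /addrI.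
by [].
Qed.


Lemma f12 : exists k, [/\ lam d1 x2 = Psi 0 1 k, lam d2 x1 = Psi 1 0 (- k) & k = - (1 / 2%:R)].
Proof.
have [a [b [k E1]]] := Psi_surj (lam d1 x2).
have [a' [b' [k' E2]]] := Psi_surj (lam d2 x1).
have H1 : al alpha2 (lam d1 x2) = sc z (lam d1 x2).
  by rewrite al_lam ?al2A ?d1D // Ha21 a2x2 (sc_addf _ _ (lamA d1D)).
have H2 : al alpha1 (lam d2 x1) = sc z (lam d2 x1).
  by rewrite al_lam ?al1A ?d2D // Ha12 a1x1 (sc_addf _ _ (lamA d2D)).
rewrite E1 Psi_a2 Psi_sc in H1; case/Psi_inj: H1 => Ha _ _.
rewrite E2 Psi_a1 Psi_sc in H2; case/Psi_inj: H2 => _ Hb' _.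
have a0 : a = 0 by apply: (@mul_eq0_neq 1 z); rewrite 1?eq_sym ?z_neq1 // mul1r.
have b0 : b' = 0 by apply: (@mul_eq0_neq 1 z); rewrite 1?eq_sym ?z_neq1 // mul1r.
have R : c (d2 * d1)%g = c (d1 * (d2 * d3))%g by rewrite rel21 mulgA.
rewrite !c_coc ?groupM ?d1D ?d2D ?d3D // f2x3 (lamA d1D) f1x3 E1 E2 a0 b0 in R.
rewrite x1E x2E x3E !PsiD in R; case/Psi_inj: R.
rewrite !addr0 !add0r => Ha' Hb Hk'.
have T : al tau (lam d1 x2) = lam d2 x1 by rewrite al_lam ?tauA ?d1D // Ht1 atx2.
rewrite E1 E2 a0 b0 Psi_tau in T; case/Psi_inj: T => _ _; rewrite Hk' => Hk.
exists k; split.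
- by rewrite E1 a0 -Hb.
- by rewrite E2 b0 Ha' Hk' Hk.
apply: (mulIf two_neq0); rewrite mulr_natr mulr2n.
have -> : k + k = -1.
  by apply/eqP; rewrite -subr_eq0 opprK -addrA -Hk addrN.
by field; exact: two_neq0.
Qed.


Lemma f3x3 : lam d3 x3 = x3.
Proof.
have := cx3.1 2; rewrite mulr2n expgS expg1 c_coc ?d3D // => /addrI.
by [].
Qed.

Lemma lam1_Psi k : lam d1 x2 = Psi 0 1 k -> forall a b t, lam d1 (Psi a b t) = Psi a b (t + b * k).
Proof.
move=> Hk a b t; rewrite (Psi_f _ _ _ (lamA d1D)) f1x1 Hk f1x3 Psi_sc -Psi_100 -Psi_001 !PsiD.
by congr Psi; ring.
Qed.

Lemma lam2_Psi k : lam d2 x1 = Psi 1 0 (- k) -> forall a b t, lam d2 (Psi a b t) = Psi a b (t - a * k).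
Proof.
move=> Hk a b t; rewrite (Psi_f _ _ _ (lamA d2D)) f2x2 Hk f2x3 Psi_sc -Psi_010 -Psi_001 !PsiD.
by congr Psi; ring.
Qed.

Lemma lam1n k : lam d1 x2 = Psi 0 1 k -> forall n a b t,
  lam (d1 ^+ n)%g (Psi a b t) = Psi a b (t + n%:R * (b * k)).
Proof.
move=> Hk n a b t; rewrite lamX ?d1D //; elim: n => [|n IH]; first by rewrite /= mul0r addr0.
by rewrite iterS IH (lam1_Psi Hk) mulrSr; congr Psi; ring.
Qed.

Lemma lam2n k : lam d2 x1 = Psi 1 0 (- k) -> forall n a b t,
  lam (d2 ^+ n)%g (Psi a b t) = Psi a b (t - n%:R * (a * k)).
Proof.
move=> Hk n a b t; rewrite lamX ?d2D //; elim: n => [|n IH]; first by rewrite /= mul0r subr0.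
by rewrite iterS IH (lam2_Psi Hk) mulrSr; congr Psi; ring.
Qed.

Lemma cd1n n : c (d1 ^+ n)%g = Psi n%:R 0 0.
Proof. by rewrite cx1.1 -(sc_nat Hq) ?t1 // Psi_100. Qed.
Lemma cd2n n : c (d2 ^+ n)%g = Psi 0 n%:R 0.
Proof. by rewrite cx2.1 -(sc_nat Hq) ?t2 // Psi_010. Qed.
Lemma cd3n n : c (d3 ^+ n)%g = Psi 0 0 n%:R.
Proof. by rewrite cx3.1 -(sc_nat Hq) ?t3 // Psi_001. Qed.

Lemma c_nf k : lam d1 x2 = Psi 0 1 k -> lam d2 x1 = Psi 1 0 (- k) -> forall a b n,
  c (d1 ^+ a * d2 ^+ b * d3 ^+ n)%g = Psi a%:R b%:R (n%:R + a%:R * b%:R * k).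
Proof.
move=> Hk1 Hk2 a b n.
rewrite c_coc ?groupM ?groupX ?d1D ?d2D ?d3D // c_coc ?groupX ?d1D ?d2D //.
rewrite cd1n cd2n cd3n lamM ?groupX ?d1D ?d2D // (lam2n Hk2) !(lam1n Hk1) !PsiD.
by congr Psi; ring.
Qed.

Definition Phi (m : 'cV[F]_3) : N := Psi (2%:R * m 2 0) (- (2%:R * m 1 0)) (m 0 0).

Lemma Phi_add m m' : Phi (m + m') = Phi m + Phi m'.
Proof. by rewrite /Phi !mxE PsiD; congr Psi; ring. Qed.

Lemma Phi_chi g : g \in D -> Phi (chi g) = c g.
Proof.
move=> Hg; have [k [Hk1 Hk2 Hk]] := f12.
have [a [b [n ->]]] := nf Hg.
rewrite chi_nf (c_nf Hk1 Hk2) /Phi !mxE /= Hk.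
by congr Psi; field; exact: two_neq0.
Qed.

Lemma uniqueness : IYB_iso D A (fun g m => (rho g *m m)%R) (actA_M Delta) chi lam al c.
Proof.
have PhiN : forall m, Phi (- m) = - Phi m.
  by move=> m; apply/eqP; rewrite -addr_eq0 -Phi_add addNr /Phi !mxE !mulr0 oppr0 Psi0.
exists Phi; split.
- exact: Phi_add.
- exists (fun w => chi (odflt 1%g [pick g in D | c g == w])).
  + move=> m; have [h Hh <-] := chi_surj m; rewrite Phi_chi //.
    case: pickP => [g /andP [Hg /eqP Hgh]|H] /=; first by rewrite (c_inj Hg Hh Hgh).
    by have := H h; rewrite Hh eqxx.
  + move=> w; case: pickP => [g /andP [Hg /eqP Hgw]|H] /=; first by rewrite Phi_chi.
    by have [g Hg Hgw] := c_surj w; have := H g; rewrite Hg Hgw eqxx.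
- move=> g Hg m; have [h Hh <-] := chi_surj m.
  have E : rho g *m chi h = chi (g * h)%g - chi g by rewrite chi_coc // [chi g + _]addrC addrK.
  by rewrite E Phi_add PhiN !Phi_chi ?groupM // c_coc // [c g + _]addrC addrK.
- move=> a Ha m; have [h Hh <-] := chi_surj m.
  by rewrite -chi_equiv // !Phi_chi ?autD // c_eq.
- by move=> g Hg; rewrite Phi_chi.
Qed.

End Uniq.

End Main.

Unset Implicit Arguments.

Theorem mainTheorem4 (q : nat) (zeta : int) (gT : finGroupType) (D : {group gT})
  (d1 d2 d3 : gT) (tau alpha1 alpha2 : {perm gT})
  (Delta : {perm gT} -> 'M['F_q]_2) (rho : gT -> 'M['F_q]_3) (chi : gT -> 'cV['F_q]_3) :
  prime q -> (q %% 4 = 1)%N ->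
  (q.-1).-primitive_root (zeta%:~R : 'F_q) ->
  #|D| = (q ^ 3)%N -> D :=: <<[set d1; d2; d3]>>%g ->
  #[d1]%g = q -> #[d2]%g = q -> #[d3]%g = q ->
  d3 \in 'Z(D)%g -> (d1^-1 * d2 * d1)%g = (d2 * d3)%g ->
  ((<[d3]> \x <[d2]>) ><| <[d1]>)%g = D ->
  tau \in Aut D -> alpha1 \in Aut D -> alpha2 \in Aut D ->
  tau d1 = d2 -> tau d2 = d1 -> tau d3 = (d3^-1)%g ->
  alpha1 d1 = zexpg d1 zeta -> alpha1 d2 = d2 -> alpha1 d3 = zexpg d3 zeta ->
  alpha2 d1 = d1 -> alpha2 d2 = zexpg d2 zeta -> alpha2 d3 = zexpg d3 zeta ->
  let A := <<[set tau; alpha1; alpha2]>>%g in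
  (* Delta is a homomorphism A -> GL_2(q) w.r.t. composition (a \o b = (b * a)%g) *)
  (forall a b, a \in A -> b \in A -> Delta (b * a)%g = (Delta a *m Delta b)%R) ->
  Delta tau = swap2 _ -> Delta alpha1 = diag2 (zeta%:~R) 1%R -> Delta alpha2 = diag2 1%R (zeta%:~R) ->
  (* the action of D on M = F_q^3 *)
  (forall g h, g \in D -> h \in D -> rho (g * h)%g = (rho g *m rho h)%R) ->
  rho d1 = matX1 _ -> rho d2 = matX2 _ -> rho d3 = 1%R ->
  (* chi(d1^n1 d2^n2 d3^n3) = (n3 - n1 n2/2, -n2/2, n1/2)^T *)
  (forall n1 n2 n3 : nat, chi (d1 ^+ n1 * d2 ^+ n2 * d3 ^+ n3)%g = chi_val _ n1 n2 n3) ->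
  IYB_structure D A (fun g m => (rho g *m m)%R) (actA_M Delta) chi /\
  (forall (M' : zmodType) (actG' : gT -> M' -> M') (actA' : {perm gT} -> M' -> M')
          (chi' : gT -> M'),
     IYB_structure D A actG' actA' chi' ->
     IYB_iso D A (fun g m => (rho g *m m)%R) (actA_M Delta) chi actG' actA' chi').
Proof.
move=> Hq Hq4 Hz HD HDg Ho1 Ho2 Ho3 Hc Hrel Hsd HtA H1A H2A Ht1 Ht2 Ht3 Ha11 Ha12 Ha13
  Ha21 Ha22 Ha23 A HDel HDt HD1 HD2 Hrho Hr1 Hr2 Hr3 Hchi.
split; first by eapply existence; eassumption.
move=> M' actG' actA' chi' HI.
by eapply uniqueness; eassumption.
Qed.
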